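(* Let $m>n$ be coprime positive integers, $\alpha=\epsilon_i-\delta_j$, $\lambda\in X_\alpha$, $\lambda^+=t_\alpha(\lambda)$, $\Lambda=x(\lambda)$ and $\Lambda^+=\tau_\alpha(\Lambda)$. If $(\Lambda^+,\beta)=0$ for $\beta=\epsilon_i-\delta_k$ with $k\in[m]$, then one of the following holds: (a) $k=j+1$, $\lambda'_j=\lambda'_{j+1}$ and $\beta=\epsilon_i-\delta_{j+1}$; (b) $\alpha=\epsilon_n-\delta_m$, $\beta=\epsilon_n-\delta_1$, $\lambda_1<m$, and $(m,1^{n-1})\subseteq\lambda^+$ (i.e. $\lambda^+_1=m$ and $\lambda^+_n\ge1$).
   Context: $X$ is the set of partitions $\lambda=(\lambda_1\ge\dots\ge\lambda_n\ge0)$ with $\lambda_1\le m$, drawn in an $n\times m$ rectangle with rows $\epsilon_1,\dots,\epsilon_n$ top to bottom and columns $\delta_1,\dots,\delta_m$; the diagram consists of boxes $\epsilon_i-\delta_j$ with $j\le\lambda_{n+1-i}$; $\lambda'_j=\#\{i:\lambda_i\ge j\}$. $X_\alpha$: diagrams for which box $\alpha$ is an outer corner; $t_\alpha$ adds that box. $x(\lambda)=(a_1,\dots,a_n|b_1,\dots,b_m)$ with $a_i=m(n-i)+n\lambda_{n+1-i}$, $b_j=n(j-1)+m\lambda'_j$; $\tau_\alpha$ adds $n$ to $a_i$ and $m$ to $b_j$. For $\Lambda=(a|b)$ and $\gamma=\epsilon_p-\delta_q$, $(\Lambda,\gamma)=a_p-b_q$. *)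

(* Defs.v *)
From mathcomp Require Import all_boot all_order all_algebra.
Set Implicit Arguments. Unset Strict Implicit. Unset Printing Implicit Defensive.
Import GRing.Theory Num.Theory.

(* A partition lambda = (lambda_1 >= ... >= lambda_n >= 0) with lambda_1 <= m
   is represented by a function lam : nat -> nat, 1-indexed: lam p = lambda_p
   for 1 <= p <= n (values outside [1,n] are irrelevant). *)
Definition is_part (n m : nat) (lam : nat -> nat) : Prop :=
  (forall p, 1 <= p < n -> lam p.+1 <= lam p) /\ (0 < n -> lam 1 <= m).

Definition conj (n : nat) (lam : nat -> nat) (j : nat) : nat :=
  count (fun p => j <= lam p) (iota 1 n).

(* box eps_i - delta_j (row i from top, column j) lies in the diagram *)
Definition in_diag (n : nat) (lam : nat -> nat) (i j : nat) : bool :=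
  j <= lam (n + 1 - i).

(* t_alpha, alpha = eps_i - delta_j: add the box in row i, i.e. increase
   lambda_{n+1-i} by one. *)
Definition t_alpha (n : nat) (i : nat) (lam : nat -> nat) : nat -> nat :=
  fun p => if p == n + 1 - i then (lam p).+1 else lam p.

(* X_alpha: lambda in X such that the box alpha = eps_i - delta_j (inside the
   n x m rectangle) is an outer corner: it is not in the diagram, it is the
   next box of its row, and adding it yields again a partition in X. *)
Definition in_X_alpha (n m : nat) (i j : nat) (lam : nat -> nat) : Prop :=
  [/\ 1 <= i <= n, 1 <= j <= m, is_part n m lam,
      ~~ in_diag n lam i j
    & (lam (n + 1 - i)).+1 = j /\ is_part n m (t_alpha n i lam)].

(* weights Lambda = (a_1,...,a_n | b_1,...,b_m), 1-indexed functions *)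
Record weight := Weight { wa : nat -> nat; wb : nat -> nat }.

Definition x_of (n m : nat) (lam : nat -> nat) : weight :=
  Weight (fun i => m * (n - i) + n * lam (n + 1 - i))
         (fun j => n * (j - 1) + m * conj n lam j).

Definition tau_alpha (n m i j : nat) (L : weight) : weight :=
  Weight (fun p => if p == i then wa L p + n else wa L p)
         (fun q => if q == j then wb L q + m else wb L q).

Definition pairing (L : weight) (p q : nat) : int :=
  ((wa L p)%:Z - (wb L q)%:Z)%R.

(* Main.v *)
Require Import Defs.
From mathcomp Require Import all_boot all_order all_algebra.
From mathcomp Require Import zify.

Lemma part_mono n m f : is_part n m f ->
  forall d p, 1 <= p -> p + d <= n -> f (p + d) <= f p.
Proof.
move=> [Hp _]; elim=> [|d IH] p H1 H2; first by rewrite addn0.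
apply: leq_trans (IH p H1 _); last by lia.
rewrite addnS; apply: Hp; lia.
Qed.

Lemma part_mono' n m f : is_part n m f ->
  forall p q, 1 <= p -> p <= q -> q <= n -> f q <= f p.
Proof.
move=> H p q H1 H2 H3.
have := @part_mono n m f H (q - p) p H1 (_ : p + (q - p) <= n).
rewrite (_ : p + (q - p) = q); last by lia.
by apply; lia.
Qed.

Lemma conj_j n m i j lam : in_X_alpha n m i j lam -> conj n lam j = n - i.
Proof.
case=> /andP[i1 i2] /andP[j1 j2] Hp _ [Hr Ht].
set r := n + 1 - i in Hr Ht.
have r1 : 1 <= r by rewrite /r; lia.
have r2 : r <= n by rewrite /r; lia.
rewrite /conj (_ : n = (r - 1) + (n - (r - 1))); last by lia.
rewrite iotaD count_cat.
have -> : count (fun p => j <= lam p) (iota 1 (r - 1)) = r - 1.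
  apply/eqP; rewrite -[X in _ == X](size_iota 1 (r - 1)) -all_count.
  apply/allP => p; rewrite mem_iota => /andP[p1 p2].
  have := @part_mono' _ _ _ Ht _ _ p1 (_ : p <= r) r2.
  rewrite /t_alpha eqxx.
  have -> : (p == n + 1 - i) = false by apply/negbTE; rewrite -/r; lia.
  rewrite Hr => H; apply: H; lia.
rewrite (eq_in_count (a2 := pred0)); first by rewrite count_pred0; lia.
move=> p; rewrite mem_iota => /andP[p1 p2] /=.
have := @part_mono' _ _ _ Hp _ _ r1 (_ : r <= p) (_ : p <= n).
lia.
Qed.

Theorem lemma4p7 (m n : nat) (hn : 0 < n) (hnm : n < m) (hcop : coprime m n)
  (i j : nat) (lam : nat -> nat) (hX : in_X_alpha n m i j lam) (k : nat)
  (hk : 1 <= k <= m)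
  (h0 : pairing (tau_alpha n m i j (x_of n m lam)) i k = 0%R) :
  (k = j.+1 /\ conj n lam j = conj n lam j.+1)
  \/ [/\ i = n, j = m, k = 1, lam 1 < m
       & t_alpha n i lam 1 = m /\ 1 <= t_alpha n i lam n].
Proof.
have Cj := @conj_j _ _ _ _ _ hX.
case: (hX) => /andP[i1 i2] /andP[j1 j2] Hp _ [Hr Ht].
move: h0; rewrite /pairing /= eqxx => /eqP; rewrite GRing.subr_eq0 => /eqP [] E0.
idtac.
set c := conj n lam k.
have Ec : c = conj n lam k by [].
clearbody c.
have cn : c <= n by rewrite Ec /conj; have := count_size (fun p => k <= lam p) (iota 1 n); rewrite size_iota.
have Hdiv : forall x d, m * x = n * d -> m %| d.
  move=> x d E; rewrite -(Gauss_dvdr _ hcop) -E; exact: dvdn_mulr.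
move: E0; case: eqP => [->|kj] E.
  exfalso.
  have E2 : m * (c + 1 - (n - i)) = n * 1 by nia.
  have := Hdiv _ _ E2; move/dvdn_leq => /(_ isT); lia.
case: (leqP j (k - 1)) => hjk.
  have E2 : m * ((n - i) - c) = n * (k - 1 - j) by nia.
  have := Hdiv _ _ E2 => /dvdn_leq H.
  have d0 : k - 1 - j = 0 by apply/eqP; apply: contraT => /negbTE Hd; have := H (_ : 0 < _); lia.
  left; split; first by lia.
  rewrite Cj; move: E Ec; rewrite (_ : k = j.+1); last by lia.
  nia.
have E2 : m * (c - (n - i)) = n * (j - (k - 1)) by nia.
have := Hdiv _ _ E2 => /dvdn_leq H.
have dm : j - (k - 1) = m.
  have := H (_ : 0 < _); last by lia.
have jm : j = m by lia.
have k1 : k = 1 by lia.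
rewrite jm in Hr dm E2 *; rewrite k1 in Ec E *.
have E3 : m * (c - (n - i)) = m * n by rewrite E2 dm mulnC.
have E4 : c - (n - i) = n by apply/eqP; rewrite -(eqn_pmul2l (_ : 0 < m)) ?E3 //; lia.
have ci : i = n by lia.
rewrite ci in Hr Cj E4 *.
have e1 : n + 1 - n = 1 by lia.
rewrite e1 in Hr.
right; split => //.
- lia.
- rewrite /t_alpha e1 eqxx; split; first lia.
  case: eqP => // _.
  have : all (fun p => 1 <= lam p) (iota 1 n).
    by rewrite all_count size_iota; apply/eqP; rewrite Ec /conj in E4 *; lia.
  move/allP => /(_ n); rewrite mem_iota; apply; lia.
Qed.
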